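(* Let $n\geq 2$ be an integer and let $\mathcal{G}\in\mathbb{EFL}_{n}$ be such that every shared vertex of $\mathcal{G}$ belongs to exactly two defining $n$-cliques of $\mathcal{G}$. Denote the shared vertex common to $Q_i$ and $Q_j$ ($1\le i<j\le n$) by $(i,j)$. (i) If $n$ is even, then the map $c$ on the shared vertices defined by $c\big((i,j)\big)\equiv i+j \pmod{n-1}$ if $j<n$, and $c\big((i,j)\big)\equiv 2i \pmod{n-1}$ if $j=n$, with values in $\{1,\ldots,n-1\}$, is a proper $(n-1)$-colouring of the shared vertices of $\mathcal{G}$ (i.e. any two adjacent shared vertices receive different colours). (ii) If $n$ is odd, then $c\big((i,j)\big)\equiv i+j\pmod{n}$, with values in $\{1,\ldots,n\}$, is a proper $n$-colouring of the shared vertices of $\mathcal{G}$. (iii) $\chi(\mathcal{G})=n$.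
   Context: For a positive integer $n$, $\mathbb{EFL}_{n}$ denotes the class of (simple) graphs $G$ that are the union of $n$ cliques $Q_1,\ldots,Q_n$, each of order $n$ (the defining $n$-cliques), such that any two of them intersect in at most one vertex; i.e. $V(G)=\bigcup V(Q_i)$ and $E(G)=\bigcup E(Q_i)$. A vertex belonging to more than one defining $n$-clique is called shared. If $Q_i$ and $Q_j$ ($i<j$) have a common vertex, it is denoted by the ordered pair $(i,j)$. When reducing modulo $t$, the complete residue system used is $\{1,\ldots,t\}$. $\chi$ denotes the chromatic number. *)

(* Defs.v *)
From mathcomp Require Import all_boot.
Set Implicit Arguments. Unset Strict Implicit. Unset Printing Implicit Defensive.

(* Graph G in EFL_n given by its defining cliques Q : 'I_n -> {set V};
   the clique with paper index k (1 <= k <= n) is Q (k-1). *)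

Definition efl_adj (n : nat) (V : finType) (Q : 'I_n -> {set V}) (x y : V) : bool :=
  (x != y) && [exists i, (x \in Q i) && (y \in Q i)].

Definition cliques_of (n : nat) (V : finType) (Q : 'I_n -> {set V}) (v : V) : {set 'I_n} :=
  [set i | v \in Q i].

Definition shared (n : nat) (V : finType) (Q : 'I_n -> {set V}) (v : V) : bool :=
  1 < #|cliques_of Q v|.

Definition is_EFL (n : nat) (V : finType) (Q : 'I_n -> {set V}) : Prop :=
  [/\ forall i, #|Q i| = n,
      forall i j, i != j -> #|Q i :&: Q j| <= 1
    & forall v : V, exists i, v \in Q i].

Definition rmod (t a : nat) : nat := if a %% t == 0 then t else a %% t.

(* colourings of the shared vertex (i,j), i<j paper indices (1-based) *)
Definition c_even (n i j : nat) : nat :=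
  if j < n then rmod n.-1 (i + j) else rmod n.-1 (2 * i).
Definition c_odd (n i j : nat) : nat := rmod n (i + j).

Definition colorable (V : finType) (adj : rel V) (k : nat) : Prop :=
  exists f : V -> 'I_k, forall x y, adj x y -> f x != f y.

Definition is_chromatic_number (V : finType) (adj : rel V) (k : nat) : Prop :=
  colorable adj k /\ forall m, colorable adj m -> k <= m.

(* Main.v *)
Require Import Defs.
From mathcomp Require Import all_boot zify.

Lemma rmod_eq t x y : 0 < t -> rmod t x = rmod t y -> x %% t = y %% t.
Proof.
move=> t0; rewrite /rmod.
have := ltn_pmod x t0; have := ltn_pmod y t0.
case: eqP => [->|_]; case: eqP => [->|_] //; lia.
Qed.

Lemma rmod_range t x : 0 < t -> 1 <= rmod t x <= t.
Proof.
move=> t0; rewrite /rmod; have := ltn_pmod x t0.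
case: eqP => [_|]; lia.
Qed.

Lemma small_mod m x y : 1 <= x <= m -> 1 <= y <= m -> x %% m = y %% m -> x = y.
Proof.
move=> hx hy.
have Hm : forall z, 1 <= z <= m -> z %% m = if z == m then 0 else z.
  move=> z hz; case: eqP => [->|ne]; first by rewrite modnn.
  by rewrite modn_small //; lia.
rewrite !Hm //; case: eqP; case: eqP; lia.
Qed.

Lemma shift_mod m c x y : (c + x) %% m = (c + y) %% m -> x %% m = y %% m.
Proof. by move/eqP; rewrite eqn_modDl => /eqP. Qed.

Lemma odd_ok n p q p' q' : 0 < p < q -> q <= n -> 0 < p' < q' -> q' <= n ->
  (p != p') || (q != q') -> [|| p == p', p == q', q == p' | q == q'] ->
  rmod n (p + q) != rmod n (p' + q').
Proof.
move=> h1 h2 h3 h4 h5 h6; apply/eqP => /rmod_eq.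
have n0 : 0 < n by lia.
move=> /(_ n0) E.
have [c [x [y [hx [hy [hxy [e1 e2]]]]]]] : exists c x y, 1 <= x <= n /\ 1 <= y <= n /\
   x != y /\ p + q = c + x /\ p' + q' = c + y.
  case/orP: h6 => [/eqP e|/orP[/eqP e|/orP[/eqP e|/eqP e]]].
  - exists p, q, q'; lia.
  - exists p, q, p'; lia.
  - exists q, p, q'; lia.
  - exists q, p, p'; lia.
rewrite e1 e2 in E; move/shift_mod: E => E.
by move/negP: hxy; apply; apply/eqP; apply: small_mod E.
Qed.

Lemma even_ok n p q p' q' : 2 <= n -> ~~ odd n -> 0 < p < q -> q <= n -> 0 < p' < q' -> q' <= n ->
  (p != p') || (q != q') -> [|| p == p', p == q', q == p' | q == q'] ->
  c_even n p q != c_even n p' q'.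
Proof.
move=> n2 ev h1 h2 h3 h4 h5 h6; rewrite /c_even.
have m0 : 0 < n.-1 by lia.
have om : odd n.-1 by move: n2 ev; case: n {h2 h4 m0} => [|[|n]] //= _ /negPn.
case: ltnP => hq; case: ltnP => hq'; apply/eqP => /rmod_eq => /(_ m0) E.
- have [c [x [y [hx [hy [hxy [e1 e2]]]]]]] : exists c x y, 1 <= x <= n.-1 /\ 1 <= y <= n.-1 /\
     x != y /\ p + q = c + x /\ p' + q' = c + y.
    case/orP: h6 => [/eqP e|/orP[/eqP e|/orP[/eqP e|/eqP e]]].
    + exists p, q, q'; lia.
    + exists p, q, p'; lia.
    + exists q, p, q'; lia.
    + exists q, p, p'; lia.
  rewrite e1 e2 in E; move/shift_mod: E => E.
  by move/negP: hxy; apply; apply/eqP; apply: small_mod E.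
- have [z [hz [hzp e]]] : exists z, 1 <= z <= n.-1 /\ z != p' /\ p + q = p' + z.
    case/orP: h6 => [/eqP e|/orP[/eqP e|/orP[/eqP e|/eqP e]]]; try lia.
    + exists q; lia.
    + exists p; lia.
  rewrite e (_ : 2 * p' = p' + p') in E; last lia.
  move/shift_mod: E => E.
  by move/negP: hzp; apply; apply/eqP; apply: small_mod E; lia.
- have [z [hz [hzp e]]] : exists z, 1 <= z <= n.-1 /\ z != p /\ p' + q' = p + z.
    case/orP: h6 => [/eqP e|/orP[/eqP e|/orP[/eqP e|/eqP e]]]; try lia.
    + exists q'; lia.
    + exists p'; lia.
  rewrite e (_ : 2 * p = p + p) in E; last lia.
  move/shift_mod: E => E.
  by move/negP: hzp; apply; apply/eqP; apply: small_mod (esym E); lia.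
- have hpp : p != p' by lia.
  have hp : 0 < p <= n.-1 by lia.
  have hp' : 0 < p' <= n.-1 by lia.
  clear h1 h3 h5 h6 hq hq' h2 h4.
  wlog lt : p p' hp hp' hpp E / p < p'.
    move=> W; case: (ltngtP p p') => c; [exact: (W p p')| |].
    + by apply: (W p' p) => //; rewrite eq_sym.
    + by move: hpp; rewrite c eqxx.
  have le2 : 2 * p <= 2 * p' by lia.
  move/eqP: E; rewrite eq_sym eqn_mod_dvd //.
  rewrite (_ : 2 * p' - 2 * p = 2 * (p' - p)); last lia.
  rewrite Gauss_dvdr; last by rewrite coprimen2.
  move/dvdn_leq; lia.
Qed.
Set Implicit Arguments. Unset Strict Implicit.

Section G.
Variables (n : nat) (V : finType) (Q : 'I_n -> {set V}).
Hypothesis HE : is_EFL Q.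
Hypothesis H2 : forall v, shared Q v -> #|cliques_of Q v| = 2.

Lemma cl2 u (i j : 'I_n) : shared Q u -> i != j -> u \in Q i -> u \in Q j ->
  forall k, u \in Q k -> (k == i) || (k == j).
Proof.
move=> sh ij ui uj k uk.
have sub : [set i; j] \subset cliques_of Q u.
  by apply/subsetP => x; rewrite !inE => /orP[] /eqP ->; rewrite ?ui ?uj.
have : [set i; j] = cliques_of Q u.
  by apply/eqP; rewrite eqEcard sub H2 // cards2 ij.
by move/setP => /(_ k); rewrite !inE uk.
Qed.

Lemma inter1 (i j : 'I_n) u v : i != j -> u \in Q i -> u \in Q j -> v \in Q i -> v \in Q j -> u = v.
Proof.
case: HE => _ h _ ij ui uj vi vj.
have := h _ _ ij; move/card_le1_eqP; apply; by rewrite inE ?ui ?vi.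
Qed.

Lemma adj_pairs u v (i j i' j' : 'I_n) :
  shared Q u -> shared Q v -> efl_adj Q u v ->
  i < j -> u \in Q i -> u \in Q j ->
  i' < j' -> v \in Q i' -> v \in Q j' ->
  ((i != i' :> nat) || (j != j' :> nat)) /\
  [|| i == i' :> nat, i == j' :> nat, j == i' :> nat | j == j' :> nat].
Proof.
move=> su sv; rewrite /efl_adj => /andP[uv /existsP[k /andP[uk vk]]] ij ui uj ij' vi vj.
have nij : i != j by rewrite -val_eqE /=; lia.
have nij' : i' != j' by rewrite -val_eqE /=; lia.
split.
  rewrite -negb_and; apply/negP => /andP[/eqP e1 /eqP e2].
  have e1' : i = i' by apply: val_inj.
  have e2' : j = j' by apply: val_inj.
  move/negP: uv; apply; apply/eqP; rewrite -e1' -e2' in vi vj; exact: (inter1 nij ui uj vi vj).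
have := cl2 su nij ui uj uk; have := cl2 sv nij' vi vj vk.
by case/orP => /eqP -> /orP[] /eqP e; rewrite e eqxx ?orbT.
Qed.


Lemma prop_odd u v (i j i' j' : 'I_n) :
  shared Q u -> shared Q v -> efl_adj Q u v ->
  i < j -> u \in Q i -> u \in Q j ->
  i' < j' -> v \in Q i' -> v \in Q j' ->
  c_odd n i.+1 j.+1 != c_odd n i'.+1 j'.+1.
Proof.
move=> su sv a ij ui uj ij' vi vj.
have [h1 h2] := adj_pairs su sv a ij ui uj ij' vi vj.
apply: odd_ok; rewrite ?ltn_ord //; lia.
Qed.

Lemma prop_even u v (i j i' j' : 'I_n) : 2 <= n -> ~~ odd n ->
  shared Q u -> shared Q v -> efl_adj Q u v ->
  i < j -> u \in Q i -> u \in Q j ->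
  i' < j' -> v \in Q i' -> v \in Q j' ->
  c_even n i.+1 j.+1 != c_even n i'.+1 j'.+1.
Proof.
move=> n2 ev su sv a ij ui uj ij' vi vj.
have [h1 h2] := adj_pairs su sv a ij ui uj ij' vi vj.
apply: even_ok; rewrite ?ltn_ord //; lia.
Qed.

End G.

Definition injf (T : finType) (U : eqType) (d : U) (A : {set T}) (B : seq U) (x : T) : U :=
  nth d B (index x (enum A)).

Lemma injf_in (T : finType) (U : finType) (d : U) (A : {set T}) (B : {set U}) x :
  #|A| <= #|B| -> x \in A -> injf d A (enum B) x \in B.
Proof.
move=> c xA; rewrite /injf -mem_enum; apply: mem_nth.
rewrite -cardE; apply: leq_trans c; rewrite cardE index_mem mem_enum //.
Qed.

Lemma injf_inj (T : finType) (U : finType) (d : U) (A : {set T}) (B : {set U}) x y :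
  #|A| <= #|B| -> x \in A -> y \in A -> injf d A (enum B) x = injf d A (enum B) y -> x = y.
Proof.
move=> c xA yA; rewrite /injf => E.
have ix : index x (enum A) < size (enum B).
  rewrite -cardE; apply: leq_trans c; rewrite cardE index_mem mem_enum //.
have iy : index y (enum A) < size (enum B).
  rewrite -cardE; apply: leq_trans c; rewrite cardE index_mem mem_enum //.
have := congr1 (fun z => index z (enum B)) E => /=.
rewrite !index_uniq ?enum_uniq // => Ei.
have xe : x = nth x (enum A) (index x (enum A)) by rewrite nth_index ?mem_enum.
have ye : y = nth x (enum A) (index y (enum A)) by rewrite nth_index ?mem_enum.
by rewrite xe ye Ei.
Qed.

Section Col.
Variables (n : nat) (V : finType) (Q : 'I_n -> {set V}).
Hypothesis n2 : 2 <= n.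
Hypothesis HE : is_EFL Q.
Hypothesis H2 : forall v, shared Q v -> #|cliques_of Q v| = 2.

Let n0 : 0 < n. Proof. by apply: leq_trans n2. Qed.
Let d : 'I_n := Ordinal n0.

Definition col (i j : 'I_n) : nat := if odd n then c_odd n i.+1 j.+1 else c_even n i.+1 j.+1.
Definition pa v := odflt d [pick i in cliques_of Q v].
Definition pb v := odflt d [pick j in cliques_of Q v :\ pa v].
Definition lo v := if pa v < pb v then pa v else pb v.
Definition hi v := if pa v < pb v then pb v else pa v.
Definition gsh v : 'I_n := Ordinal (ltn_pmod (col (lo v) (hi v)) n0).

Lemma sh_props v : shared Q v -> [/\ lo v < hi v, v \in Q (lo v) & v \in Q (hi v)].
Proof.
move=> sv; have c2 := H2 sv; rewrite /lo /hi /pb.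
have [a [aS ->]] : exists a, a \in cliques_of Q v /\ pa v = a.
  rewrite /pa; case: pickP => [a Ha|none]; first by exists a.
  by move: c2; rewrite (eq_card0 none).
have [b [bS ->]] : exists b, b \in cliques_of Q v :\ a /\ odflt d [pick j in cliques_of Q v :\ a] = b.
  case: pickP => [b Hb|none]; first by exists b.
  by move: c2; rewrite (cardsD1 a) aS (eq_card0 none).
move: bS; rewrite !inE in aS * => /andP[ba bS].
case: ifP => h; first by split.
split => //; move: ba h; rewrite -val_eqE /=; lia.
Qed.

Lemma col_range (i j : 'I_n) : 1 <= col i j <= n.
Proof.
rewrite /col /c_odd /c_even; case: ifP => _; first exact: rmod_range.
have m0 : 0 < n.-1 by lia.
by case: ifP => _; [have := rmod_range _ (i.+1 + j.+1) m0|have := rmod_range _ (2 * i.+1) m0]; lia.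
Qed.

Lemma gsh_proper u v : shared Q u -> shared Q v -> efl_adj Q u v -> gsh u != gsh v.
Proof.
move=> su sv a.
have [l1 u1 u2] := sh_props su; have [l2 v1 v2] := sh_props sv.
have ne : col (lo u) (hi u) != col (lo v) (hi v).
  rewrite /col; case: ifP => od.
  - exact: (prop_odd HE H2 su sv a).
  - by apply: (prop_even HE H2 _ _ su sv a) => //; rewrite od.
rewrite -val_eqE /=; apply/negP => /eqP E; move/negP: ne; apply; apply/eqP.
exact: small_mod (col_range _ _) (col_range _ _) E.
Qed.

Definition Sh k := Q k :&: [set x | shared Q x].
Definition Pr k := Q k :\: [set x | shared Q x].
Definition Bk k := ~: (gsh @: Sh k).
Definition kv v := odflt d [pick i | v \in Q i].
Definition fcol v := if shared Q v then gsh v else injf d (Pr (kv v)) (enum (Bk (kv v))) v.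

Lemma card_ok k : #|Pr k| <= #|Bk k|.
Proof.
have e1 := cardsID [set x | shared Q x] (Q k).
case: HE => hc _ _; rewrite hc in e1.
rewrite /Bk; have := cardsC (gsh @: Sh k); rewrite card_ord.
have := leq_imset_card gsh (Sh k); rewrite /Sh /Pr; lia.
Qed.

Lemma kv_ok v k : ~~ shared Q v -> v \in Q k -> kv v = k.
Proof.
move=> ns vk; rewrite /kv; case: pickP => [a va|none]; last by move: (none k); rewrite vk.
move: ns; rewrite /shared -leqNgt => /card_le1_eqP; apply; by rewrite inE.
Qed.

Lemma fcol_proper x y : efl_adj Q x y -> fcol x != fcol y.
Proof.
move=> a; have := a; rewrite /efl_adj => /andP[xy /existsP[k /andP[xk yk]]].
rewrite /fcol; case: ifP => sx; case: ifP => sy.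
- exact: gsh_proper.
- rewrite (kv_ok (negbT sy) yk).
  have : injf d (Pr k) (enum (Bk k)) y \in Bk k.
    by apply: injf_in; [exact: card_ok| rewrite !inE yk sy].
  rewrite /Bk inE; apply: contraNneq => <-.
  by apply: imset_f; rewrite !inE xk sx.
- rewrite (kv_ok (negbT sx) xk).
  have : injf d (Pr k) (enum (Bk k)) x \in Bk k.
    by apply: injf_in; [exact: card_ok| rewrite !inE xk sx].
  rewrite /Bk inE; apply: contraNneq => ->.
  by apply: imset_f; rewrite !inE yk sy.
- rewrite (kv_ok (negbT sx) xk) (kv_ok (negbT sy) yk).
  apply/negP => /eqP E; move/negP: xy; apply; apply/eqP.
  by apply: (injf_inj (card_ok k)) E; rewrite !inE ?xk ?yk ?sx ?sy.
Qed.

Lemma lower m : colorable (efl_adj Q) m -> n <= m.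
Proof.
case=> f hf.
case: HE => hc _ _.
have inj : {in Q d &, injective f}.
  move=> x y xQ yQ E; case: (eqVneq x y) => // ne.
  have : efl_adj Q x y by rewrite /efl_adj ne; apply/existsP; exists d; rewrite xQ yQ.
  by move/hf; rewrite E eqxx.
have := card_in_imset inj; rewrite hc => <-.
by apply: leq_trans (max_card _) _; rewrite card_ord.
Qed.

Lemma chrom : is_chromatic_number (efl_adj Q) n.
Proof. split; last exact: lower. by exists fcol; exact: fcol_proper. Qed.
End Col.

Theorem theorem2p4 (n : nat) (V : finType) (Q : 'I_n -> {set V}) :
  2 <= n ->
  is_EFL Q ->
  (forall v, shared Q v -> #|cliques_of Q v| = 2) ->
  [/\
   (* (i) *)
   (~~ odd n ->
      (forall (v : V) (i j : 'I_n), i < j -> v \in Q i -> v \in Q j ->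
         1 <= c_even n i.+1 j.+1 <= n.-1) /\
      (forall (u v : V) (i j i' j' : 'I_n),
         shared Q u -> shared Q v -> efl_adj Q u v ->
         i < j -> u \in Q i -> u \in Q j ->
         i' < j' -> v \in Q i' -> v \in Q j' ->
         c_even n i.+1 j.+1 != c_even n i'.+1 j'.+1)),
   (* (ii) *)
   (odd n ->
      (forall (v : V) (i j : 'I_n), i < j -> v \in Q i -> v \in Q j ->
         1 <= c_odd n i.+1 j.+1 <= n) /\
      (forall (u v : V) (i j i' j' : 'I_n),
         shared Q u -> shared Q v -> efl_adj Q u v ->
         i < j -> u \in Q i -> u \in Q j ->
         i' < j' -> v \in Q i' -> v \in Q j' ->
         c_odd n i.+1 j.+1 != c_odd n i'.+1 j'.+1))
   (* (iii) *)
   & is_chromatic_number (efl_adj Q) n].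
Proof.
move=> n2 HE H2; split.
- move=> ev; split.
  + move=> v i j _ _ _; have m0 : 0 < n.-1 by lia.
    by rewrite /c_even; case: ifP => _; apply: rmod_range.
  + move=> u v i j i' j' su sv a ij ui uj ij' vi vj.
    exact: (prop_even HE H2 n2 ev su sv a ij ui uj ij' vi vj).
- move=> od; split.
  + move=> v i j _ _ _; have n0 : 0 < n by lia.
    by rewrite /c_odd; apply: rmod_range.
  + move=> u v i j i' j' su sv a ij ui uj ij' vi vj.
    exact: (prop_odd HE H2 su sv a ij ui uj ij' vi vj).
- exact: chrom.
Qed.
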